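(* Let $\mathbf{C}_{\mathrm{ATM}}$ be the class of all absolute team independence structures $\mathcal{I}_X$ (for all teams $X$, with arbitrary domain $I$ and arbitrary value set $M$). Then for every set $\Sigma$ of absolute independence atoms over $V$ and every absolute independence atom $\phi$ over $V$, $$\Sigma\vdash_{\mathcal{AI}}\phi \iff \Sigma\models_{\mathbf{C}_{\mathrm{ATM}}}\phi .$$
   Context: Fix a countably infinite set $V$ of variables. An absolute independence atom over $V$ is an expression $\bot(\vec x)$ where $\vec x$ is a finite (possibly empty) sequence of pairwise distinct variables from $V$. Derivability $\Sigma\vdash_{\mathcal{AI}}\phi$ means that $\phi$ belongs to the smallest set of absolute independence atoms containing $\Sigma$ and closed under the rules: (a) $\bot(\emptyset)$ (empty sequence) is derivable; (b) from $\bot(\vec x\vec y)$ infer $\bot(\vec x)$ (here $\vec x\vec y$ is concatenation); (c) from $\bot(\vec x)$ infer $\bot(\vec y)$ for any permutation $\vec y$ of $\vec x$. An absolute independence structure is a pair $(I,\mathcal{A})$ with $I$ a nonempty set and $\mathcal{A}$ a set of finite subsets of $I$ closed under subsets. A team with domain $I$ and values in $M$ is a set $X$ of functions $s:I\to M$. For a finite $\mathbf{x}\subseteq I$ and $x_i\in\mathbf{x}$ let $\mathbf{x}-_X x_i=\{x_j\in\mathbf{x} : \exists s\in X\ (s(x_i)\neq s(x_j))\}$; for $s,s'\in X$ and a set $\mathbf{z}\subseteq I$, $s(\mathbf{z})=s'(\mathbf{z})$ means $s(z)=s'(z)$ for all $z\in\mathbf{z}$. Let $\mathcal{A}_X$ be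 the set of finite $\mathbf{x}\subseteq I$ such that for every $x_i\in\mathbf{x}$: (1) for all $s,s'\in X$ there is $s''\in X$ with $s''(x_i)=s(x_i)$ and $s''(\mathbf{x}-_X x_i)=s'(\mathbf{x}-_X x_i)$, and (2) there are $s,s'\in X$ with $s(x_i)\neq s'(x_i)$. The absolute team independence structure of $X$ is $\mathcal{I}_X=(I,\mathcal{A}_X)$. Semantics: an assignment into $(I,\mathcal{A})$ is a map $s:V\to I$; for a sequence $\vec x=(x_0,\dots,x_{n-1})$ put $s(\vec x)=\{s(x_0),\dots,s(x_{n-1})\}$; $s$ satisfies $\bot(\vec x)$ in $(I,\mathcal{A})$ iff $s(\vec x)\in\mathcal{A}$. For a class $\mathbf{C}$ of such structures, $\Sigma\models_{\mathbf{C}}\phi$ means every assignment into every structure in $\mathbf{C}$ satisfying all atoms of $\Sigma$ also satisfies $\phi$. *)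

(* Defs.v *)
(* Variables V := nat (countably infinite). *)
From Stdlib Require Import List Permutation.
Import ListNotations.

(* An absolute independence atom ⊥(x) is represented by its variable
   sequence x : list nat; it is well formed iff its variables are
   pairwise distinct (NoDup x). *)
Definition atom (x : list nat) : Prop := NoDup x.

Inductive derivable (Sigma : list nat -> Prop) : list nat -> Prop :=
| der_hyp : forall phi, Sigma phi -> derivable Sigma phi
| der_empty : derivable Sigma []
| der_prefix : forall x y, derivable Sigma (x ++ y) -> derivable Sigma x
| der_perm : forall x y, derivable Sigma x -> Permutation x y -> derivable Sigma y.

Definition team (I M : Type) := (I -> M) -> Prop.

(* Membership of the finite subset {i | In i x} of I in A_X. *)
Definition in_AX {I M : Type} (X : team I M) (x : list I) : Prop :=
  forall xi, In xi x ->
    (forall s s', X s -> X s' ->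
       exists s'', X s'' /\ s'' xi = s xi /\
         (forall xj, In xj x -> (exists t, X t /\ t xi <> t xj) ->
            s'' xj = s' xj))
    /\ (exists s s', X s /\ X s' /\ s xi <> s' xi).

Definition sat_team {I M : Type} (X : team I M) (f : nat -> I) (x : list nat) : Prop :=
  in_AX X (map f x).

Definition models_ATM (Sigma : list nat -> Prop) (phi : list nat) : Prop :=
  forall (I M : Type) (X : team I M), (exists i : I, True) ->
    forall f : nat -> I,
      (forall sigma, Sigma sigma -> sat_team X f sigma) -> sat_team X f phi.

(* Main.v *)
Require Import Defs.
From Stdlib Require Import List Permutation Classical Arith Bool.
Import ListNotations.

Lemma in_AX_incl {I M : Type} (X : team I M) (l l' : list I) :
  incl l l' -> in_AX X l' -> in_AX X l.
Proof.
  intros Hi H xi Hxi. destruct (H xi (Hi _ Hxi)) as [H1 H2]. split; auto.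
  intros s s' Hs Hs'. destruct (H1 s s' Hs Hs') as [s'' [A [B C]]].
  exists s''. repeat split; auto.
Qed.

Lemma soundness Sigma phi : derivable Sigma phi -> models_ATM Sigma phi.
Proof.
  induction 1; intros J M X _ f Hf.
  - apply Hf; auto.
  - intros xi [].
  - eapply in_AX_incl; [|apply (IHderivable J M X (ex_intro _ (f 0) Logic.I) f Hf)].
    apply incl_map. apply incl_appl. apply incl_refl.
  - eapply in_AX_incl; [|apply (IHderivable J M X (ex_intro _ (f 0) Logic.I) f Hf)].
    apply incl_map. intros a Ha. eapply Permutation_in; [apply Permutation_sym; eauto|auto].
Qed.

Lemma derive_incl Sigma sigma phi : Sigma sigma -> NoDup sigma -> NoDup phi ->
  incl phi sigma -> derivable Sigma phi.
Proof.
  intros HS Hs Hp Hi.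
  set (rest := filter (fun n => if in_dec Nat.eq_dec n phi then false else true) sigma).
  apply der_prefix with rest.
  apply der_perm with sigma; [apply der_hyp; auto|].
  apply NoDup_Permutation; auto.
  - apply NoDup_app; auto. apply NoDup_filter; auto.
    intros a Ha Hr. unfold rest in Hr. apply filter_In in Hr as [_ Hr].
    destruct (in_dec Nat.eq_dec a phi); congruence.
  - intros x. rewrite in_app_iff. unfold rest. rewrite filter_In. split.
    + intros Hx. destruct (in_dec Nat.eq_dec x phi); auto.
    + intros [Hx|[Hx _]]; auto.
Qed.

Definition parity (s : nat -> bool) (l : list nat) : bool :=
  fold_right (fun n b => xorb (s n) b) false l.

Definition flip (s : nat -> bool) (a : nat) : nat -> bool :=
  fun n => if Nat.eqb n a then negb (s n) else s n.

Lemma parity_ext s t l : (forall n, In n l -> s n = t n) -> parity s l = parity t l.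
Proof.
  induction l; simpl; intros H; auto. rewrite H, IHl; auto.
Qed.

Lemma parity_flip_notin s a l : ~ In a l -> parity (flip s a) l = parity s l.
Proof.
  intros H. apply parity_ext. intros n Hn. unfold flip.
  destruct (Nat.eqb_spec n a); subst; tauto.
Qed.

Lemma parity_flip_in s a l : NoDup l -> In a l -> parity (flip s a) l = negb (parity s l).
Proof.
  induction l as [|c l IH]; simpl; intros Hn Hi; [destruct Hi|].
  inversion Hn; subst. destruct (Nat.eq_dec c a).
  - subst. rewrite parity_flip_notin; auto. unfold flip. rewrite Nat.eqb_refl.
    destruct (s a), (parity s l); reflexivity.
  - destruct Hi as [Hi|Hi]; [congruence|]. rewrite IH; auto.
    unfold flip. apply Nat.eqb_neq in n. rewrite n.
    destruct (s c), (parity s l); reflexivity.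
Qed.

Lemma parity_zero l : parity (fun _ => false) l = false.
Proof. induction l; simpl; auto. Qed.

Definition PT (phi : list nat) : team nat bool := fun s => parity s phi = true.

Lemma flip_neq s a n : n <> a -> flip s a n = s n.
Proof. intros H. unfold flip. apply Nat.eqb_neq in H. rewrite H; auto. Qed.

Lemma flip_eq s a : flip s a a = negb (s a).
Proof. unfold flip. rewrite Nat.eqb_refl; auto. Qed.

Lemma PT_good phi x p : NoDup phi -> In p phi -> ~ In p x -> in_AX (PT phi) x.
Proof.
  intros Hn Hp Hpx xi Hxi. assert (Hpi : p <> xi) by (intro; subst; auto).
  split.
  - intros s s' Hs Hs'.
    set (s1 := fun n => if Nat.eqb n xi then s xi else s' n).
    exists (if parity s1 phi then s1 else flip s1 p).
    assert (E : forall n, n <> p -> (if parity s1 phi then s1 else flip s1 p) n = s1 n).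
    { intros n Hnp. destruct (parity s1 phi); auto. apply flip_neq; auto. }
    repeat split.
    + unfold PT. destruct (parity s1 phi) eqn:E1; auto.
      rewrite parity_flip_in, E1; auto.
    + rewrite E; auto. unfold s1. rewrite Nat.eqb_refl; auto.
    + intros xj Hxj [t [_ Ht]]. rewrite E by (intro; subst; auto).
      unfold s1. destruct (Nat.eqb_spec xj xi); subst; [congruence|auto].
  - exists (flip (fun _ => false) p).
    assert (H0 : PT phi (flip (fun _ => false) p)).
    { unfold PT. rewrite parity_flip_in, parity_zero; auto. }
    destruct (in_dec Nat.eq_dec xi phi).
    + exists (flip (flip (flip (fun _ => false) p) xi) p). unfold PT in *.
      repeat split; [exact H0| |].
      * rewrite (parity_flip_in (flip (flip (fun _ => false) p) xi) p),
          (parity_flip_in (flip (fun _ => false) p) xi), H0; auto.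
      * unfold flip. rewrite Nat.eqb_refl.
        destruct (Nat.eqb_spec xi p); [congruence|]. simpl. discriminate.
    + exists (flip (flip (fun _ => false) p) xi). unfold PT in *.
      repeat split; [exact H0| |].
      * rewrite parity_flip_notin, H0; auto.
      * unfold flip. rewrite Nat.eqb_refl.
        destruct (Nat.eqb_spec xi p); [congruence|]. simpl. discriminate.
Qed.

Lemma PT_bad phi : NoDup phi -> phi <> [] -> ~ in_AX (PT phi) phi.
Proof.
  intros Hn Hne H. destruct phi as [|a rest]; [congruence|].
  destruct (H a (or_introl eq_refl)) as [H1 H2].
  destruct rest as [|b rest].
  - destruct H2 as [s [s' [Hs [Hs' Hd]]]]. unfold PT in *. simpl in *.
    rewrite xorb_false_r in *. congruence.
  - inversion Hn; subst. assert (Hab : a <> b) by (intro; subst; simpl in *; tauto).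
    assert (Hs' : PT (a :: b :: rest) (flip (fun _ => false) b)).
    { unfold PT. rewrite parity_flip_in, parity_zero; simpl; auto. }
    assert (Hs : PT (a :: b :: rest) (flip (fun _ => false) a)).
    { unfold PT. rewrite parity_flip_in, parity_zero; simpl; auto. }
    destruct (H1 _ _ Hs Hs') as [s'' [Hs'' [Ha Hj]]].
    assert (Hag : forall n, In n (a :: b :: rest) -> s'' n = flip (flip (fun _ => false) b) a n).
    { intros n Hin. destruct (Nat.eq_dec n a).
      - subst. rewrite Ha, flip_eq, flip_eq, flip_neq; auto.
      - rewrite flip_neq by auto. apply Hj; auto.
        exists (flip (fun _ => false) a). split; auto.
        rewrite flip_eq, flip_neq by auto. discriminate. }
    unfold PT in Hs''. rewrite (parity_ext _ _ _ Hag) in Hs''.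
    rewrite parity_flip_in in Hs''; simpl; auto. unfold PT in Hs'. rewrite Hs' in Hs''.
    discriminate.
Qed.

Theorem mainTheorem1 (Sigma : list nat -> Prop) (phi : list nat) :
  (forall sigma, Sigma sigma -> atom sigma) -> atom phi ->
  (derivable Sigma phi <-> models_ATM Sigma phi).
Proof.
  intros HS Hphi. split; [apply soundness|].
  intros Hm.
  destruct (classic (phi = [])) as [E|Hne]; [subst; apply der_empty|].
  destruct (classic (exists sigma, Sigma sigma /\ incl phi sigma)) as [[sigma [H1 H2]]|Hno].
  - apply (derive_incl Sigma sigma phi H1 (HS _ H1) Hphi H2).
  - exfalso. apply (PT_bad phi Hphi Hne).
    specialize (Hm nat bool (PT phi) (ex_intro _ 0 I) (fun n => n)).
    unfold sat_team in Hm. rewrite map_id in Hm. apply Hm.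
    intros sigma Hs. rewrite map_id.
    assert (~ incl phi sigma) by (intro; apply Hno; eauto).
    assert (exists p, In p phi /\ ~ In p sigma) as [p [Hp Hp']].
    { apply NNPP. intro Hc. apply H. intros p Hp. apply NNPP. intro. apply Hc; eauto. }
    eapply PT_good; eauto.
Qed.
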